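(* Let $\mathcal{S}$ be an $E$-unitary inverse semigroupoid, let $\theta$ be the Munn action of $\mathcal{S}$ on $E(\mathcal{S})$, and let $\alpha$ be the induced ordered partial action of $\mathcal{S}/\sigma$ on $E(\mathcal{S})$. Then the map $\phi:\mathcal{S}\to\mathcal{S}/\sigma\ltimes_\alpha E(\mathcal{S})$, $\phi(s)=(\pi_\sigma(s),s^*s)$, is an isomorphism of semigroupoids; in particular $\mathcal{S}\cong\mathcal{S}/\sigma\ltimes_\alpha E(\mathcal{S})$.
   Context: Inverse semigroupoid: arrows $\mathcal{S}$, objects $\mathcal{S}^{(0)}$, maps $d,c$, associative multiplication on $\mathcal{S}^{(2)}=\{(s,t):d(s)=c(t)\}$ with $d(st)=d(t)$, $c(st)=c(s)$, unique $s^*$ with $ss^*s=s$, $s^*ss^*=s^*$; $E(\mathcal{S})$ = idempotents (a semilatticeoid: idempotents over the same object commute and their product is their meet), ordered by the natural order: for parallel $s,t$, $s\leqslant t$ iff $s=te$ for an idempotent $e$ with $(t,e)\in\mathcal{S}^{(2)}$. $(s,t)\in\sigma$ iff some $r\leqslant s,t$; $\mathcal{S}/\sigma$ is the groupoid of $\sigma$-classes $\pi_\sigma(s)$ with $d(\pi_\sigma(s))=d(s)$, $c(\pi_\sigma(s))=c(s)$, $\pi_\sigma(s)\pi_\sigma(t)=\pi_\sigma(st)$, $\pi_\sigma(s)^*=\pi_\sigma(s^* )$. $E$-unitary: $(s,e)\in\sigma$, $e$ idempotent imply $s$ idempotent. A morphism of semigroupoids $\varphi$ maps composable pairs to composable pairs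 with $\varphi(st)=\varphi(s)\varphi(t)$; an isomorphism is a bijective morphism whose inverse is a morphism. Munn action: $X_s=\{e\in E(\mathcal{S}):e\leqslant ss^*\}$, $\theta_s:X_{s^*}\to X_s$, $\theta_s(e)=ses^*$. Induced action of $\mathcal{S}/\sigma$: $D_{\pi_\sigma(s)}=\bigcup_{t:(s,t)\in\sigma}X_t$ and $\alpha_{\pi_\sigma(s)}:D_{\pi_\sigma(s^* )}\to D_{\pi_\sigma(s)}$, $\alpha_{\pi_\sigma(s)}(e)=\theta_t(e)$ for any $t$ with $(s,t)\in\sigma$ and $e\in X_{t^*}$. Semidirect product of a groupoid $\mathcal{G}$ acting partially by $\alpha=(\{D_g\},\{\alpha_g\})$ on a semilatticeoid $Y$: $\mathcal{G}\ltimes_\alpha Y=\{(g,y): y\in D_{g^*}\}$, objects $\mathcal{G}^{(0)}\times Y^{(0)}$, $d(g,y)=(d(g),d(y))$, $c(g,y)=(c(g),c(\alpha_g(y)))$, product $(g,x)(h,y)=(gh,\alpha_{h^*}(x\,\alpha_h(y)))$ defined when $(g,h)$ composable and $(x,\alpha_h(y))\in Y^{(2)}$ (i.e. over the same object). *)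

(* Defs.v *)
From Stdlib Require Import Classical ClassicalEpsilon FunctionalExtensionality PropExtensionality.

Set Implicit Arguments.

(* [mul] is a total function; only its values on composable pairs
   (dom s = cod t) are meaningful. *)
Record InvSemigroupoid := {
  arr : Type;
  obj : Type;
  dom : arr -> obj;
  cod : arr -> obj;
  mul : arr -> arr -> arr;
  mul_dom : forall s t, dom s = cod t -> dom (mul s t) = dom t;
  mul_cod : forall s t, dom s = cod t -> cod (mul s t) = cod s;
  mul_assoc : forall r s t, dom r = cod s -> dom s = cod t ->
      mul r (mul s t) = mul (mul r s) t;
  star : arr -> arr;
  star_dom : forall s, dom s = cod (star s);
  star_cod : forall s, dom (star s) = cod s;
  star_l : forall s, mul (mul s (star s)) s = s;
  star_r : forall s, mul (mul (star s) s) (star s) = star s;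
  star_uniq : forall s u, dom s = cod u -> dom u = cod s ->
      mul (mul s u) s = s -> mul (mul u s) u = u -> u = star s
}.

Section Defs.
Variable S : InvSemigroupoid.

Definition idempotent (e : arr S) : Prop :=
  dom S e = cod S e /\ mul S e e = e.

Definition nat_le (s t : arr S) : Prop :=
  dom S s = dom S t /\ cod S s = cod S t /\
  exists e, idempotent e /\ dom S t = cod S e /\ s = mul S t e.

Definition sigma_rel (s t : arr S) : Prop :=
  exists r, nat_le r s /\ nat_le r t.

Definition E_unitary : Prop :=
  forall s e, idempotent e -> sigma_rel s e -> idempotent s.

Definition Xset (s : arr S) (e : arr S) : Prop :=
  idempotent e /\ nat_le e (mul S s (star S s)).

Definition theta (s e : arr S) : arr S := mul S (mul S s e) (star S s).

Definition sigma_class (s : arr S) : arr S -> Prop := fun t => sigma_rel s t.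

Definition qarr : Type := { X : arr S -> Prop | exists s, X = sigma_class s }.

Definition pi_sigma (s : arr S) : qarr :=
  exist _ (sigma_class s) (ex_intro _ s eq_refl).

Definition qrep (g : qarr) : arr S :=
  proj1_sig (constructive_indefinite_description _ (proj2_sig g)).

Definition qdom (g : qarr) : obj S := dom S (qrep g).
Definition qcod (g : qarr) : obj S := cod S (qrep g).
Definition qmul (g h : qarr) : qarr := pi_sigma (mul S (qrep g) (qrep h)).
Definition qstar (g : qarr) : qarr := pi_sigma (star S (qrep g)).

Definition Dset (g : qarr) (e : arr S) : Prop :=
  exists t, proj1_sig g t /\ Xset t e.

(* alpha_g(e) = theta_t(e) for any t in g with e in X_{t*} (well defined by
   the paper); outside the domain an arbitrary junk value (e) is returned. *)
Definition alpha (g : qarr) (e : arr S) : arr S :=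
  match excluded_middle_informative
          (exists t, proj1_sig g t /\ Xset (star S t) e) with
  | left H => theta (proj1_sig (constructive_indefinite_description _ H)) e
  | right _ => e
  end.

Definition sdarr : Type := { p : qarr * arr S | Dset (qstar (fst p)) (snd p) }.

Definition sdobj : Type := (obj S * obj S)%type.

Definition sddom (p : sdarr) : sdobj :=
  (qdom (fst (proj1_sig p)), dom S (snd (proj1_sig p))).
Definition sdcod (p : sdarr) : sdobj :=
  (qcod (fst (proj1_sig p)), cod S (alpha (fst (proj1_sig p)) (snd (proj1_sig p)))).

Definition sdmul_raw (p q : qarr * arr S) : qarr * arr S :=
  let (g, x) := p in let (h, y) := q in
  (qmul g h, alpha (qstar h) (mul S x (alpha h y))).

(* The product lands in the semidirect product on composable pairs (paper);
   elsewhere a junk value (the first argument) is returned. *)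
Definition sdmul (p q : sdarr) : sdarr :=
  match excluded_middle_informative
          (Dset (qstar (fst (sdmul_raw (proj1_sig p) (proj1_sig q))))
                (snd (sdmul_raw (proj1_sig p) (proj1_sig q)))) with
  | left H => exist _ (sdmul_raw (proj1_sig p) (proj1_sig q)) H
  | right _ => p
  end.

End Defs.

Definition is_sg_morphism {A B OA OB : Type}
  (dA cA : A -> OA) (mA : A -> A -> A)
  (dB cB : B -> OB) (mB : B -> B -> B) (f : A -> B) : Prop :=
  forall s t, dA s = cA t -> dB (f s) = cB (f t) /\ f (mA s t) = mB (f s) (f t).

Definition is_sg_isomorphism {A B OA OB : Type}
  (dA cA : A -> OA) (mA : A -> A -> A)
  (dB cB : B -> OB) (mB : B -> B -> B) (f : A -> B) : Prop :=
  is_sg_morphism dA cA mA dB cB mB f /\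
  exists g : B -> A, (forall a, g (f a) = a) /\ (forall b, f (g b) = b) /\
    is_sg_morphism dB cB mB dA cA mA g.

(* Main.v *)
Require Import Defs.
From Stdlib Require Import Classical ClassicalEpsilon FunctionalExtensionality PropExtensionality ProofIrrelevance.

Ltac dc := repeat (first [ rewrite mul_dom by dc | rewrite mul_cod by dc
                         | rewrite star_cod | rewrite <- star_dom ]);
           first [reflexivity | congruence].

Ltac la := repeat (rewrite mul_assoc by dc).

Section A.
Variable S : InvSemigroupoid.
Local Notation m := (mul S).
Local Notation st := (star S).
Local Notation d := (dom S).
Local Notation c := (cod S).

Lemma ss s : st (st s) = s.
Proof. symmetry; apply star_uniq; [dc|dc|apply star_r|apply star_l]. Qed.

Lemma idem_star e : idempotent S e -> st e = e.
Proof. intros [H1 H2]. symmetry; apply star_uniq; try congruence; rewrite !H2; auto. Qed.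

Lemma idem_l s : idempotent S (m s (st s)).
Proof. split. dc. rewrite (mul_assoc S (m s (st s)) s (st s)) by dc. now rewrite star_l. Qed.

Lemma idem_r s : idempotent S (m (st s) s).
Proof. pose proof (idem_l (st s)). now rewrite ss in H. Qed.

Lemma asc a b e : d a = c b -> d b = c e -> m a (m b e) = m (m a b) e.
Proof. intros; apply mul_assoc; auto. Qed.

Lemma idc a f : idempotent S f -> d a = c f -> m (m a f) f = m a f.
Proof. intros [H1 H2] H. rewrite <- asc by dc. now rewrite H2. Qed.

Lemma idp e f : idempotent S e -> idempotent S f -> d e = d f -> idempotent S (m e f).
Proof.
  intros He Hf Hd. pose proof He as [He1 He2]. pose proof Hf as [Hf1 Hf2].
  set (a := m e f). set (x := st a).
  assert (Haux : m (m (m (m (m f x) e) f) x) e = m (m f x) e).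
  { rewrite <- (asc (m (m f x) e) f x) by (subst a x; dc).
    rewrite <- (asc (m f x) e (m f x)) by (subst a x; dc).
    rewrite (asc e f x) by (subst a x; dc). fold a.
    rewrite <- (asc f x (m a x)) by (subst a x; dc).
    rewrite (asc x a x) by (subst a x; dc). subst x. rewrite star_r. reflexivity. }
  assert (Hy : m (m f x) e = x).
  { subst x. apply star_uniq; subst a.
    - dc. - dc.
    - la. rewrite idc by (auto; dc). rewrite idc by (auto; dc).
      rewrite <- (asc _ e f) by dc. apply star_l.
    - fold (st (m e f)). la. rewrite idc by (auto; dc). rewrite idc by (auto; dc).
      exact Haux. }
  assert (Hx : idempotent S x).
  { split. subst x a; dc.
    transitivity (m (m (m f x) e) (m (m f x) e)). now rewrite Hy.
    subst x a. la. rewrite Haux. exact Hy. }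
  assert (a = x). { rewrite <- (ss a). fold x. apply idem_star. auto. }
  rewrite H. auto.
Qed.

Lemma comm e f : idempotent S e -> idempotent S f -> d e = d f -> m e f = m f e.
Proof.
  intros He Hf Hd. pose proof He as [He1 He2]. pose proof Hf as [Hf1 Hf2].
  rewrite <- (idem_star _ (idp e f He Hf Hd)) at 1. symmetry. apply star_uniq.
  - dc. - dc.
  - la. rewrite idc by (auto; dc). rewrite idc by (auto; dc).
    rewrite <- (asc (m e f) e f) by dc. apply idp; auto.
  - la. rewrite idc by (auto; dc). rewrite idc by (auto; dc).
    rewrite <- (asc (m f e) f e) by dc. apply idp; auto.
Qed.

Lemma star_mul s t : d s = c t -> st (m s t) = m (st t) (st s).
Proof.
  intro H. symmetry. apply star_uniq; try dc.
  - transitivity (m (m s (m (m t (st t)) (m (st s) s))) t). { la. reflexivity. }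
    rewrite (comm _ _ (idem_l t) (idem_r s)) by dc.
    la. rewrite star_l. rewrite <- (asc s t (st t)) by dc.
    rewrite <- (asc s (m t (st t)) t) by dc. rewrite star_l. reflexivity.
  - transitivity (m (m (st t) (m (m (st s) s) (m t (st t)))) (st s)). { la. reflexivity. }
    rewrite <- (comm _ _ (idem_l t) (idem_r s)) by dc.
    la. rewrite star_r. rewrite <- (asc (st t) (st s) s) by dc.
    rewrite <- (asc (st t) (m (st s) s) (st s)) by dc. rewrite star_r. reflexivity.
Qed.

Lemma le_refl s : nat_le S s s.
Proof.
  split; [reflexivity|split; [reflexivity|]]. exists (m (st s) s).
  split. apply idem_r. split. dc. la. now rewrite star_l.
Qed.

Lemma le_idem t f : idempotent S f -> d t = c f -> nat_le S (m t f) t.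
Proof. intros Hf H. pose proof Hf as [Hf1 Hf2]. split. dc. split. dc. exists f. auto. Qed.

Lemma le_form s t : nat_le S s t -> s = m t (m (st s) s).
Proof.
  intros [Hd [Hc [e [He [Hte Hs]]]]]. pose proof He as [He1 He2]. subst s.
  rewrite star_mul by dc. rewrite (idem_star e He).
  transitivity (m t (m (m e (m (st t) t)) e)).
  2:{ la. reflexivity. }
  rewrite (comm _ _ He (idem_r t)) by dc. la. rewrite star_l. rewrite idc; auto; dc.
Qed.

Lemma le_idem_eq e f : idempotent S e -> idempotent S f -> nat_le S e f -> m f e = e /\ m e f = e.
Proof.
  intros He Hf [Hd [Hc [g [Hg [Hfg Hs]]]]]. pose proof Hf as [Hf1 Hf2]. pose proof Hg as [Hg1 Hg2].
  subst e. split.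
  - rewrite asc by dc. now rewrite Hf2.
  - rewrite <- asc by dc. rewrite (comm _ _ Hg Hf) by dc. rewrite asc by dc. now rewrite Hf2.
Qed.

Lemma moveL f t : idempotent S f -> d f = c t ->
  m f t = m t (m (m (st t) f) t) /\ idempotent S (m (m (st t) f) t).
Proof.
  intros Hf H. pose proof Hf as [Hf1 Hf2]. split.
  - transitivity (m (m (m t (st t)) f) t). 2:{ la. reflexivity. }
    rewrite (comm _ _ (idem_l t) Hf) by dc.
    rewrite <- (asc f (m t (st t)) t) by dc. now rewrite star_l.
  - split. dc.
    transitivity (m (m (st t) (m (m f (m t (st t))) f)) t). { la. reflexivity. }
    rewrite <- (comm _ _ (idem_l t) Hf) by dc.
    la. rewrite star_r. rewrite idc; auto. dc.
Qed.

Lemma sig_par s t : sigma_rel S s t -> d s = d t /\ c s = c t.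
Proof. intros [r [[H1 [H2 _]] [H3 [H4 _]]]]. split; congruence. Qed.

Lemma sig_refl s : sigma_rel S s s.
Proof. exists s. split; apply le_refl. Qed.

Lemma sig_sym s t : sigma_rel S s t -> sigma_rel S t s.
Proof. intros [r [H1 H2]]. exists r. auto. Qed.

Lemma sig_trans a b cc : sigma_rel S a b -> sigma_rel S b cc -> sigma_rel S a cc.
Proof.
  intros [r1 [Ha1 Hb1]] [r2 [Hb2 Hc2]].
  pose proof (le_form _ _ Ha1) as Ea. pose proof (le_form _ _ Hb1) as Eb.
  pose proof (le_form _ _ Hb2) as Eb'. pose proof (le_form _ _ Hc2) as Ec.
  destruct Ha1 as [Da1 [Ca1 _]]. destruct Hb1 as [Db1 [Cb1 _]].
  destruct Hb2 as [Db2 [Cb2 _]]. destruct Hc2 as [Dc2 [Cc2 _]].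
  exists (m r1 (m (st r2) r2)). split.
  - rewrite Ea at 1. rewrite <- asc by dc. apply le_idem. apply idp; try apply idem_r. dc. dc.
  - rewrite Eb at 1. rewrite <- asc by dc.
    rewrite (comm _ _ (idem_r r1) (idem_r r2)) by dc.
    rewrite asc by dc. rewrite <- Eb'. rewrite Ec at 1. rewrite <- asc by dc.
    apply le_idem. apply idp; try apply idem_r. dc. dc.
Qed.

Lemma le_mul a b x y : nat_le S a b -> nat_le S x y -> d b = c y -> nat_le S (m a x) (m b y).
Proof.
  intros [Da [Ca [e [He [Hbe Ha]]]]] [Dx [Cx [g [Hg [Hyg Hx]]]]] H.
  pose proof He as [He1 He2]. pose proof Hg as [Hg1 Hg2]. subst a x.
  destruct (moveL e y He) as [E1 E2]. dc.
  replace (m (m b e) (m y g)) with (m (m b (m e y)) g) by (la; reflexivity).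
  rewrite E1. pose proof E2 as [E3 E4].
  replace (m (m b (m y (m (m (st y) e) y))) g) with (m (m b y) (m (m (m (st y) e) y) g))
    by (la; reflexivity).
  apply le_idem. apply idp; auto. dc. dc.
Qed.

Lemma le_star r s : nat_le S r s -> nat_le S (st r) (st s).
Proof.
  intros H. pose proof (le_form _ _ H) as E.
  destruct H as [Dr [Cr [e [He [Hse Hr]]]]]. pose proof He as [He1 He2]. subst r.
  rewrite star_mul by dc. rewrite (idem_star e He).
  destruct (moveL e (st s) He) as [E1 E2]. dc.
  rewrite E1. rewrite ss in *. apply le_idem; auto. dc.
Qed.

Lemma sig_star s t : sigma_rel S s t -> sigma_rel S (st s) (st t).
Proof. intros [r [H1 H2]]. exists (st r). split; apply le_star; auto. Qed.

Lemma sig_mul s s' t t' : sigma_rel S s s' -> sigma_rel S t t' -> d s = c t ->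
  sigma_rel S (m s t) (m s' t').
Proof.
  intros [r [H1 H2]] [q [H3 H4]] H.
  pose proof H1 as [A1 [A2 _]]. pose proof H2 as [A3 [A4 _]].
  pose proof H3 as [A5 [A6 _]]. pose proof H4 as [A7 [A8 _]].
  exists (m r q). split; apply le_mul; auto; congruence.
Qed.

Lemma Eu_idem s t : E_unitary S -> sigma_rel S s t -> idempotent S (m s (st t)).
Proof.
  intros HE [r [H1 H2]]. pose proof H1 as [A1 [A2 _]]. pose proof H2 as [A3 [A4 _]].
  apply HE with (e := m r (st r)). apply idem_l.
  exists (m r (st r)). split. apply le_mul; auto. apply le_star; auto. dc.
  apply le_refl.
Qed.

Lemma Eu_C s t : E_unitary S -> sigma_rel S s t -> m s (m (st t) t) = m t (m (st s) s).
Proof.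
  intros HE Hst. pose proof (Eu_idem _ _ HE Hst) as Hf.
  pose proof (idem_star _ Hf) as Hf'. destruct (sig_par _ _ Hst) as [P1 P2].
  rewrite star_mul, ss in Hf' by dc. destruct Hf as [Hf1 Hf2].
  transitivity (m (m (m s (st s)) s) (m (st t) t)). { rewrite star_l; reflexivity. }
  transitivity (m s (m (m (st s) s) (m (st t) t))). { la. reflexivity. }
  rewrite (comm _ _ (idem_r s) (idem_r t)) by dc.
  transitivity (m (m (m s (st t)) (m t (st s))) s). { la. reflexivity. }
  rewrite Hf'. rewrite Hf2. rewrite <- Hf'. rewrite <- asc by dc. reflexivity.
Qed.

Lemma exist_eq' (T : Type) (P : T -> Prop) X Y (p : P X) (q : P Y) :
  X = Y -> exist P X p = exist P Y q.
Proof. intros; subst; f_equal; apply proof_irrelevance. Qed.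

Lemma pi_ext s t : sigma_rel S s t -> pi_sigma S s = pi_sigma S t.
Proof.
  intros H. unfold pi_sigma. apply exist_eq'. unfold sigma_class.
  apply functional_extensionality; intro u. apply propositional_extensionality.
  split; intro H'. eapply sig_trans; [apply sig_sym|]; eauto. eapply sig_trans; eauto.
Qed.

Lemma qrep_spec g : proj1_sig g = sigma_class S (qrep g).
Proof. exact (proj2_sig (constructive_indefinite_description _ (proj2_sig g))). Qed.

Lemma pi_qrep g : pi_sigma S (qrep g) = g.
Proof. destruct g as [X p]. unfold pi_sigma. apply exist_eq'.
  pose proof (qrep_spec (exist _ X p)). simpl in H. auto. Qed.

Lemma qrep_pi s : sigma_rel S s (qrep (pi_sigma S s)).
Proof.
  pose proof (qrep_spec (pi_sigma S s)) as H. simpl in H.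
  change (sigma_class S s (qrep (pi_sigma S s))). rewrite H. apply sig_refl.
Qed.

Lemma qdom_pi s : qdom (pi_sigma S s) = d s.
Proof. unfold qdom. symmetry. apply (sig_par _ _ (qrep_pi s)). Qed.
Lemma qcod_pi s : qcod (pi_sigma S s) = c s.
Proof. unfold qcod. symmetry. apply (sig_par _ _ (qrep_pi s)). Qed.

Lemma qmul_pi s t : d s = c t -> qmul (pi_sigma S s) (pi_sigma S t) = pi_sigma S (m s t).
Proof.
  intro H. unfold qmul. apply pi_ext. apply sig_mul; try (apply sig_sym, qrep_pi).
  destruct (sig_par _ _ (qrep_pi s)). destruct (sig_par _ _ (qrep_pi t)). congruence.
Qed.

Lemma qstar_pi s : qstar (pi_sigma S s) = pi_sigma S (st s).
Proof. unfold qstar. apply pi_ext. apply sig_star, sig_sym, qrep_pi. Qed.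

Lemma alpha_eq v x : E_unitary S -> Xset S (st v) x -> alpha (pi_sigma S v) x = m (m v x) (st v).
Proof.
  intros HE Hv. unfold alpha. destruct (excluded_middle_informative _) as [H|H].
  - destruct (constructive_indefinite_description _ H) as [u [Hu Hx]]. simpl.
    simpl in Hu. change (sigma_rel S v u) in Hu.
    destruct Hx as [Hx Hxu]. destruct Hv as [_ Hxv]. rewrite ss in Hxu, Hxv.
    pose proof Hx as [Hx1 Hx2]. destruct (sig_par _ _ Hu) as [P1 P2].
    destruct (le_idem_eq _ _ Hx (idem_r u) Hxu) as [U1 U2].
    destruct (le_idem_eq _ _ Hx (idem_r v) Hxv) as [V1 V2].
    destruct Hxv as [Q1 [Q2 _]].
    assert (Q1' : d x = d v) by (rewrite Q1; dc). assert (Q2' : c x = d v) by (rewrite Q2; dc).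
    assert (Hux : m u x = m v x).
    { rewrite <- V1 at 1. rewrite asc by dc.
      rewrite (Eu_C u v HE (sig_sym _ _ Hu)). rewrite <- asc by dc.
      rewrite U1. reflexivity. }
    assert (Hs : m x (st u) = m x (st v)).
    { rewrite <- (idem_star x Hx) at 1 2. rewrite <- !star_mul by dc. now rewrite Hux. }
    unfold theta. rewrite Hux. rewrite <- !asc by dc. now rewrite Hs.
  - exfalso. apply H. exists v. split. apply sig_refl. auto.
Qed.

Lemma Xset_self s : Xset S (st s) (m (st s) s).
Proof. split. apply idem_r. rewrite ss. apply le_refl. Qed.

Lemma phi_ok s : Dset (qstar (fst (pi_sigma S s, m (st s) s))) (snd (pi_sigma S s, m (st s) s)).
Proof. simpl. rewrite qstar_pi. exists (st s). split. apply sig_refl. apply Xset_self. Qed.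

Definition phi s : sdarr S := exist _ (pi_sigma S s, m (st s) s) (phi_ok s).

Lemma sddom_phi s : sddom (phi s) = (d s, d s).
Proof. unfold sddom; simpl. rewrite qdom_pi. f_equal. dc. Qed.

Lemma sdcod_phi s : E_unitary S -> sdcod (phi s) = (c s, c s).
Proof. intro HE. unfold sdcod; simpl. rewrite qcod_pi, alpha_eq by (auto; apply Xset_self).
  f_equal. dc. Qed.

Lemma phi_mul s t : E_unitary S -> d s = c t -> sdmul (phi s) (phi t) = phi (m s t).
Proof.
  intros HE H. unfold sdmul.
  assert (Hraw : sdmul_raw (proj1_sig (phi s)) (proj1_sig (phi t)) = proj1_sig (phi (m s t))).
  { simpl. f_equal. apply qmul_pi; auto.
    rewrite (alpha_eq t) by (auto; apply Xset_self).
    replace (m (m t (m (st t) t)) (st t)) with (m t (st t)) by (la; rewrite star_l; reflexivity).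
    rewrite qstar_pi. rewrite alpha_eq; auto.
    - rewrite ss. rewrite star_mul by auto.
      transitivity (m (m (m (st t) (st s)) s) (m (m t (st t)) t)). { la; reflexivity. }
      rewrite star_l. la; reflexivity.
    - rewrite ss. split. apply idp. apply idem_r. apply idem_l. dc.
      rewrite (comm _ _ (idem_r s) (idem_l t)) by dc. apply le_idem. apply idem_r. dc. }
  destruct (excluded_middle_informative _) as [H1|H1].
  - unfold phi at 3. apply exist_eq'. exact Hraw.
  - exfalso. apply H1. rewrite Hraw. exact (proj2_sig (phi (m s t))).
Qed.

Lemma phi_inj s t : E_unitary S -> phi s = phi t -> s = t.
Proof.
  intros HE H. apply (f_equal (@proj1_sig _ _)) in H. simpl in H. injection H as H1 H2.
  assert (Hst : sigma_rel S s t).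
  { try (apply (f_equal (@proj1_sig _ _)) in H1; simpl in H1).
    change (sigma_class S s t). rewrite H1. apply sig_refl. }
  transitivity (m s (m (st s) s)). { la. now rewrite star_l. }
  rewrite H2, (Eu_C s t HE Hst), H2. la. now rewrite star_l.
Qed.

Lemma phi_surj b : exists a, phi a = b.
Proof.
  destruct b as [[g x] H]. pose proof H as H'. simpl in H'.
  destruct H' as [t [Ht [Hx Hxt]]]. unfold qstar in Ht. simpl in Ht.
  change (sigma_rel S (st (qrep g)) t) in Ht.
  pose proof Hx as [Hx1 Hx2]. pose proof Hxt as [Q1 [Q2 _]].
  assert (Q1' : d x = c t) by (rewrite Q1; dc). assert (Q2' : c x = c t) by (rewrite Q2; dc).
  exists (m (st t) x). unfold phi. apply exist_eq'. f_equal.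
  - rewrite <- (pi_qrep g). apply pi_ext. apply sig_trans with (st t).
    exists (m (st t) x). split. apply le_refl. apply le_idem; auto. dc.
    pose proof (sig_star _ _ (sig_sym _ _ Ht)) as K. rewrite ss in K. exact K.
  - rewrite star_mul by dc. rewrite ss, (idem_star x Hx).
    transitivity (m (m x (m t (st t))) x). { la; reflexivity. }
    destruct (le_idem_eq _ _ Hx (idem_l t) Hxt) as [_ E]. rewrite E. exact Hx2.
Qed.

End A.

Theorem mainTheorem14 (S : InvSemigroupoid) (HE : E_unitary S) :
  exists phi : arr S -> sdarr S,
    (forall s, proj1_sig (phi s) = (pi_sigma S s, mul S (star S s) s)) /\
    is_sg_isomorphism (dom S) (cod S) (mul S)
                      (@sddom S) (@sdcod S) (@sdmul S) phi.
Proof.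
  exists (phi S). split. intros; reflexivity. split.
  - intros s t H. split. rewrite sddom_phi, sdcod_phi by auto. congruence.
    rewrite phi_mul; auto.
  - set (g := fun b => proj1_sig (constructive_indefinite_description _ (phi_surj S b))).
    assert (fg : forall b, phi S (g b) = b).
    { intro b. unfold g. exact (proj2_sig (constructive_indefinite_description _ (phi_surj S b))). }
    assert (gf : forall a, g (phi S a) = a). { intro a. apply (phi_inj S); auto. }
    exists g. split; auto. split; auto.
    intros b1 b2 H. rewrite <- (fg b1), <- (fg b2) in H.
    rewrite sddom_phi, sdcod_phi in H by auto. injection H as H1 _.
    split. auto. rewrite <- (fg b1) at 1. rewrite <- (fg b2) at 1.
    rewrite phi_mul by auto. apply gf.
Qed.
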